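(* (a) Suppose $\mathbf{x}=(x_s)\in\mathbb{C}^{\mathbb{Z}^2}$ satisfies $Q^C(\mathbf{x})=0$ for all unit squares $C$, satisfies $\prod_{C\ni v}Q^C_v(\mathbf{x})=-\prod_{S\ni v}(x_v+x_{v_1})$ for all $v\in\mathbb{Z}^2$, and satisfies $x_v+x_{v+e_i}\neq0$ for all $v\in\mathbb{Z}^2$, $i\in\{1,2\}$. Then $\mathbf{x}$ extends to an array $\tilde{\mathbf{x}}=(x_s)\in\mathbb{C}^{\mathbb{Z}^2\cup E}$ such that for all $v\in\mathbb{Z}^2$, writing $z_{ij}=x_{v+(i,j)}$, $$z_{11}=3z_{00}+z_{10}+z_{01}+2\sqrt2\,z_{\frac120}z_{0\frac12},\quad z_{\frac121}=z_{\frac120}+\sqrt2\,z_{0\frac12},\quad z_{1\frac12}=z_{0\frac12}+\sqrt2\,z_{\frac120},$$ $$z_{\frac120}^2=z_{00}+z_{10},\qquad z_{0\frac12}^2=z_{00}+z_{01}.$$ (b) Conversely, if $\tilde{\mathbf{x}}=(x_s)\in\mathbb{C}^{\mathbb{Z}^2\cup E}$ satisfies these five equations for all $v\in\mathbb{Z}^2$, then its restriction $\mathbf{x}$ to $\mathbb{Z}^2$ satisfies $Q^C(\mathbf{x})=0$ for all unit squares $C$ and $\prod_{C\ni v}Q^C_v(\mathbf{x})=-\prod_{S\ni v}(x_v+x_{v_1})$ for all $v\in\mathbb{Z}^2$.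
   Context: $e_1=(1,0)$, $e_2=(0,1)$; $E=\mathbb{Z}^2+\{(\frac12,0),(0,\frac12)\}$ is the set of midpoints of unit edges. For a unit square $C$ with vertex values $z_{00},z_{10},z_{01},z_{11}$ (via $C\cong\{0,1\}^2$), $Q^C(\mathbf{x})=z_{00}^2+z_{10}^2+z_{01}^2+z_{11}^2-2(z_{00}z_{10}+z_{10}z_{11}+z_{11}z_{01}+z_{01}z_{00})-6(z_{00}z_{11}+z_{10}z_{01})$; for a vertex $v$ of $C$ with labeling chosen so that $z_{00}=x_v$, $Q^C_v(\mathbf{x})=\frac{1}{2\sqrt2}(z_{11}-z_{10}-z_{01}-3z_{00})$. In the products, $C$ ranges over the $4$ unit squares containing $v$ and $S$ over the $4$ unit edges containing $v$, $v_1$ being the other endpoint of $S$. *)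

(* Defs.v *)
From mathcomp Require Import all_boot all_algebra.
From mathcomp.real_closed Require Import complex.
From mathcomp Require Import Rstruct.
Set Implicit Arguments. Unset Strict Implicit. Unset Printing Implicit Defensive.
Import GRing.Theory Num.Theory.
Local Open Scope ring_scope.

Definition CC : numClosedFieldType := (Rdefinitions.R)[i].

Definition sqrt2 : CC := sqrtC 2.

Definition QC (x : int -> int -> CC) (a b : int) : CC :=
  let z00 := x a b in let z10 := x (a+1) b in
  let z01 := x a (b+1) in let z11 := x (a+1) (b+1) in
  z00^+2 + z10^+2 + z01^+2 + z11^+2
  - 2 * (z00 * z10 + z10 * z11 + z11 * z01 + z01 * z00)
  - 6 * (z00 * z11 + z10 * z01).

(* Q^C_v for v = (a,b) and C the unit square with vertices v, v+(s,0),
   v+(0,t), v+(s,t), with s,t in {1,-1}: z00 = x_v, z10,z01 the two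
   neighbours of v in C, z11 the vertex of C opposite to v. *)
Definition QCv (x : int -> int -> CC) (a b s t : int) : CC :=
  (x (a+s) (b+t) - x (a+s) b - x a (b+t) - 3 * x a b) / (2 * sqrt2).

Definition prodQv (x : int -> int -> CC) (a b : int) : CC :=
  QCv x a b 1 1 * QCv x a b (-1) 1 * QCv x a b 1 (-1) * QCv x a b (-1) (-1).

Definition prodEdges (x : int -> int -> CC) (a b : int) : CC :=
  (x a b + x (a+1) b) * (x a b + x (a-1) b)
  * (x a b + x a (b+1)) * (x a b + x a (b-1)).

(* An array on Z^2 \cup E is encoded in doubled coordinates:
   xt p q = x_{(p/2, q/2)} for integers p, q not both odd (values at
   p, q both odd are irrelevant).  Its restrZ2ion to Z^2: *)
Definition restrZ2 (xt : int -> int -> CC) : int -> int -> CC :=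
  fun a b => xt (2*a) (2*b).

Definition five_eqs (xt : int -> int -> CC) (a b : int) : Prop :=
  let z00 := xt (2*a) (2*b) in let z10 := xt (2*a+2) (2*b) in
  let z01 := xt (2*a) (2*b+2) in let z11 := xt (2*a+2) (2*b+2) in
  let zh0 := xt (2*a+1) (2*b) in let z0h := xt (2*a) (2*b+1) in
  let zh1 := xt (2*a+1) (2*b+2) in let z1h := xt (2*a+2) (2*b+1) in
  [/\ z11 = 3 * z00 + z10 + z01 + 2 * sqrt2 * zh0 * z0h,
      zh1 = zh0 + sqrt2 * z0h,
      z1h = z0h + sqrt2 * zh0,
      zh0 ^+ 2 = z00 + z10
    & z0h ^+ 2 = z00 + z01].

(* Main.v *)
Require Import Defs.
From mathcomp Require Import all_boot all_algebra.
From mathcomp.real_closed Require Import complex.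
From mathcomp Require Import Rstruct ring.
From Stdlib Require Import ClassicalEpsilon.
Import GRing.Theory Num.Theory.
Local Open Scope ring_scope.
Set Implicit Arguments. Unset Strict Implicit.

Section Alg.
Variables (F : fieldType) (s : F) (hs : s^+2 = 2) (hs2 : 2*s != 0).

Lemma h8 : (2*s)^+2 != 0.
Proof. by rewrite expf_neq0. Qed.

Lemma solve_div (X Y : F) : X/(2*s) = Y -> X = Y*(2*s).
Proof. by move=> <-; rewrite divfK. Qed.

Lemma lin_eq (D z E : F) : D = 0 -> z + D = E -> z = E.
Proof. by move=> -> ; rewrite addr0. Qed.

Lemma a_solve11 z00 z10 z01 z11 u w :
  (z11 - z10 - z01 - 3*z00)/(2*s) = u*w -> z11 = z10 + z01 + 3*z00 + 2*s*u*w.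
Proof.
move/solve_div => h; apply: (lin_eq (D := -((z11 - z10 - z01 - 3*z00) - u*w*(2*s)))).
  by rewrite h subrr oppr0.
ring.
Qed.

Lemma a_full z00 z10 z01 z11 u w :
  u^+2 = z00+z10 -> w^+2 = z00+z01 -> (z11 - z10 - z01 - 3*z00)/(2*s) = u*w ->
 [/\ (u + s*w)^+2 = z01 + z11, (w + s*u)^+2 = z10 + z11,
     (z01 - z00 - z11 - 3*z10)/(2*s) = -(u*(w+s*u)),
     (z10 - z11 - z00 - 3*z01)/(2*s) = -((u+s*w)*w)
   & (z00 - z01 - z10 - 3*z11)/(2*s) = -((u+s*w)*(w+s*u))].
Proof.
move=> hu hw /a_solve11 ->.
have -> : z10 = u^+2 - z00 by rewrite hu; ring.
have -> : z01 = w^+2 - z00 by rewrite hw; ring.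
split; first (by ring: hs); first (by ring: hs);
  apply: (mulIf hs2); rewrite divfK //; ring: hs.
Qed.

Lemma a_QC z00 z10 z01 z11 u w :
  u^+2 = z00+z10 -> w^+2 = z00+z01 -> (z11 - z10 - z01 - 3*z00)/(2*s) = u*w ->
  z00^+2 + z10^+2 + z01^+2 + z11^+2
  - 2 * (z00 * z10 + z10 * z11 + z11 * z01 + z01 * z00)
  - 6 * (z00 * z11 + z10 * z01) = 0.
Proof.
move=> hu hw /a_solve11 ->.
have -> : z10 = u^+2 - z00 by rewrite hu; ring.
have -> : z01 = w^+2 - z00 by rewrite hw; ring.
ring: hs.
Qed.

Lemma a_C10 z00 z10 z01 z11 u R :
  u^+2 = z00+z10 -> R^+2 = z10+z11 -> (z01 - z00 - z11 - 3*z10)/(2*s) = -(u*R) ->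
  (R - s*u)^+2 = z00 + z01 /\ (z11 - z10 - z01 - 3*z00)/(2*s) = u*(R - s*u).
Proof.
move=> hu hR /solve_div h.
have e11 : z11 = z01 - z00 - 3*z10 + 2*s*u*R.
  apply: (lin_eq (D := (z01 - z00 - z11 - 3*z10) - (-(u*R))*(2*s))); first by rewrite h subrr.
  ring.
have e10 : z10 = u^+2 - z00 by rewrite hu; ring.
have e01 : z01 = R^+2 + 2*u^+2 - z00 - 2*s*u*R.
  apply: (lin_eq (D := (R^+2 - (z10 + z11)))); first by rewrite hR subrr.
  rewrite e11 e10; ring.
rewrite e11 e01 e10; split; first by ring: hs.
apply: (mulIf hs2); rewrite divfK //; ring: hs.
Qed.

Lemma a_C01 z00 z10 z01 z11 w T :
  w^+2 = z00+z01 -> T^+2 = z01+z11 -> (z10 - z11 - z00 - 3*z01)/(2*s) = -(T*w) ->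
  (T - s*w)^+2 = z00 + z10 /\ (z11 - z10 - z01 - 3*z00)/(2*s) = (T - s*w)*w.
Proof.
move=> hw hT /solve_div h.
have e11 : z11 = z10 - z00 - 3*z01 + 2*s*T*w.
  apply: (lin_eq (D := (z10 - z11 - z00 - 3*z01) - (-(T*w))*(2*s))); first by rewrite h subrr.
  ring.
have e01 : z01 = w^+2 - z00 by rewrite hw; ring.
have e10 : z10 = T^+2 + 2*w^+2 - z00 - 2*s*T*w.
  apply: (lin_eq (D := (T^+2 - (z01 + z11)))); first by rewrite hT subrr.
  rewrite e11 e01; ring.
rewrite e11 e10 e01; split; first by ring: hs.
apply: (mulIf hs2); rewrite divfK //; ring: hs.
Qed.

Lemma a_C11 z00 z10 z01 z11 T R :
  T^+2 = z01+z11 -> R^+2 = z10+z11 -> (z00 - z01 - z10 - 3*z11)/(2*s) = -(T*R) ->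
  [/\ (s*R - T)^+2 = z00 + z10, (s*T - R)^+2 = z00 + z01
    & (z11 - z10 - z01 - 3*z00)/(2*s) = (s*R - T)*(s*T - R)].
Proof.
move=> hT hR /solve_div h.
have e01 : z01 = T^+2 - z11 by rewrite hT; ring.
have e10 : z10 = R^+2 - z11 by rewrite hR; ring.
have e00 : z00 = z01 + z10 + 3*z11 - 2*s*T*R.
  apply: (lin_eq (D := -((z00 - z01 - z10 - 3*z11) - (-(T*R))*(2*s)))); first by rewrite h subrr oppr0.
  ring.
rewrite e00 e01 e10; split; first (by ring: hs); first (by ring: hs).
apply: (mulIf hs2); rewrite divfK //; ring: hs.
Qed.

Lemma a_QCsq z00 z10 z01 z11 :
  z00^+2 + z10^+2 + z01^+2 + z11^+2
  - 2 * (z00 * z10 + z10 * z11 + z11 * z01 + z01 * z00)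
  - 6 * (z00 * z11 + z10 * z01) = 0 ->
  [/\ ((z11 - z10 - z01 - 3*z00)/(2*s))^+2 = (z00+z10)*(z00+z01),
      ((z01 - z00 - z11 - 3*z10)/(2*s))^+2 = (z00+z10)*(z10+z11)
    & ((z10 - z11 - z00 - 3*z01)/(2*s))^+2 = (z00+z01)*(z01+z11)].
Proof.
move=> hQ.
have key : forall X Y : F, X^+2 - 8*Y = z00^+2 + z10^+2 + z01^+2 + z11^+2
  - 2 * (z00 * z10 + z10 * z11 + z11 * z01 + z01 * z00)
  - 6 * (z00 * z11 + z10 * z01) -> (X/(2*s))^+2 = Y.
  move=> X Y; rewrite hQ => hXY.
  rewrite expr_div_n; apply: (mulIf h8); rewrite divfK ?h8 //.
  apply: (lin_eq (D := -(X^+2 - 8*Y))); first by rewrite hXY oppr0.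
  ring: hs.
split; apply: key; ring.
Qed.

Lemma a_sqdiv (q A B c : F) : q^+2 = A*B -> c^+2 = A -> c != 0 -> (q/c)^+2 = B.
Proof.
move=> hq hc c0; rewrite expr_div_n hq -hc mulrC mulKf //. by rewrite expf_neq0.
Qed.

Lemma cancel3 (q c a b d : F) : a != 0 -> b != 0 -> d != 0 -> q*(a*b*d) = c*(a*b*d) -> q = c.
Proof. by move=> na nb nd; apply: mulIf; rewrite !mulf_neq0. Qed.

Lemma a_vertex (q1 q2 q3 q4 c1 c2 c3 c4 : F) :
  q1*q2*q3*q4 = c1*c2*c3*c4 -> c1 != 0 -> c2 != 0 -> c3 != 0 -> c4 != 0 ->
  [/\ q2 = c2 -> q3 = c3 -> q4 = c4 -> q1 = c1,
      q1 = c1 -> q3 = c3 -> q4 = c4 -> q2 = c2,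
      q1 = c1 -> q2 = c2 -> q4 = c4 -> q3 = c3
    & q1 = c1 -> q2 = c2 -> q3 = c3 -> q4 = c4].
Proof.
move=> hP n1 n2 n3 n4; split=> e1 e2 e3; move: hP; rewrite ?e1 ?e2 ?e3 => h.
- apply: (cancel3 n2 n3 n4); have -> : q1*(c2*c3*c4) = q1*c2*c3*c4 by ring. by rewrite h; ring.
- apply: (cancel3 n1 n3 n4); have -> : q2*(c1*c3*c4) = c1*q2*c3*c4 by ring. by rewrite h; ring.
- apply: (cancel3 n1 n2 n4); have -> : q3*(c1*c2*c4) = c1*c2*q3*c4 by ring. by rewrite h; ring.
- apply: (cancel3 n1 n2 n3); have -> : q4*(c1*c2*c3) = c1*c2*c3*q4 by ring. by rewrite h; ring.
Qed.

End Alg.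

Lemma hs : sqrt2 ^+ 2 = 2. Proof. exact: sqrtCK. Qed.
Lemma hs2 : 2 * sqrt2 != 0.
Proof.
rewrite mulf_eq0 negb_or; apply/andP; split; first by rewrite pnatr_eq0.
apply/eqP => h; have := hs; rewrite h expr0n /= => /eqP; by rewrite eq_sym pnatr_eq0.
Qed.

Local Notation s := sqrt2.
Definition eH (x : int -> int -> CC) (a b : int) := x a b + x (a+1) b.
Definition eV (x : int -> int -> CC) (a b : int) := x a b + x a (b+1).

Lemma X_full x a b u w : u^+2 = eH x a b -> w^+2 = eV x a b -> QCv x a b 1 1 = u*w ->
 [/\ (u + s*w)^+2 = eH x a (b+1), (w + s*u)^+2 = eV x (a+1) b,
   QCv x (a+1) b (-1) 1 = -(u*(w+s*u)), QCv x a (b+1) 1 (-1) = -((u+s*w)*w)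
 & QCv x (a+1) (b+1) (-1) (-1) = -((u+s*w)*(w+s*u))].
Proof. rewrite /eH /eV /QCv !addrK. move=> h1 h2 h3; by move: (a_full hs hs2 h1 h2 h3). Qed.

Lemma X_C10 x a b u R : u^+2 = eH x a b -> R^+2 = eV x (a+1) b ->
  QCv x (a+1) b (-1) 1 = -(u*R) ->
  (R - s*u)^+2 = eV x a b /\ QCv x a b 1 1 = u*(R - s*u).
Proof. rewrite /eH /eV /QCv !addrK. move=> h1 h2 h3; by move: (a_C10 hs hs2 h1 h2 h3). Qed.

Lemma X_C01 x a b w T : w^+2 = eV x a b -> T^+2 = eH x a (b+1) ->
  QCv x a (b+1) 1 (-1) = -(T*w) ->
  (T - s*w)^+2 = eH x a b /\ QCv x a b 1 1 = (T - s*w)*w.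
Proof. rewrite /eH /eV /QCv !addrK. move=> h1 h2 h3; by move: (a_C01 hs hs2 h1 h2 h3). Qed.

Lemma X_C11 x a b T R : T^+2 = eH x a (b+1) -> R^+2 = eV x (a+1) b ->
  QCv x (a+1) (b+1) (-1) (-1) = -(T*R) ->
  [/\ (s*R - T)^+2 = eH x a b, (s*T - R)^+2 = eV x a b
    & QCv x a b 1 1 = (s*R - T)*(s*T - R)].
Proof. rewrite /eH /eV /QCv !addrK. move=> h1 h2 h3; by move: (a_C11 hs hs2 h1 h2 h3). Qed.

Lemma X_QCsq x a b : QC x a b = 0 ->
  [/\ QCv x a b 1 1 ^+2 = eH x a b * eV x a b,
      QCv x (a+1) b (-1) 1 ^+2 = eH x a b * eV x (a+1) b
    & QCv x a (b+1) 1 (-1) ^+2 = eV x a b * eH x a (b+1)].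
Proof. rewrite /eH /eV /QCv /QC !addrK. move=> h1; by move: (a_QCsq hs hs2 h1). Qed.

Lemma X_QC x a b u w : u^+2 = eH x a b -> w^+2 = eV x a b -> QCv x a b 1 1 = u*w ->
  QC x a b = 0.
Proof. rewrite /eH /eV /QCv /QC. move=> h1 h2 h3; by move: (a_QC hs hs2 h1 h2 h3). Qed.

Lemma X_vertex x a b hr hl vu vd : prodQv x a b = - prodEdges x a b ->
  hr^+2 = eH x a b -> hl^+2 = eH x (a-1) b -> vu^+2 = eV x a b -> vd^+2 = eV x a (b-1) ->
  hr != 0 -> hl != 0 -> vu != 0 -> vd != 0 ->
  [/\ QCv x a b (-1) 1 = -(hl*vu) -> QCv x a b 1 (-1) = -(hr*vd) -> QCv x a b (-1) (-1) = -(hl*vd) -> QCv x a b 1 1 = hr*vu,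
      QCv x a b 1 1 = hr*vu -> QCv x a b 1 (-1) = -(hr*vd) -> QCv x a b (-1) (-1) = -(hl*vd) -> QCv x a b (-1) 1 = -(hl*vu),
      QCv x a b 1 1 = hr*vu -> QCv x a b (-1) 1 = -(hl*vu) -> QCv x a b (-1) (-1) = -(hl*vd) -> QCv x a b 1 (-1) = -(hr*vd)
    & QCv x a b 1 1 = hr*vu -> QCv x a b (-1) 1 = -(hl*vu) -> QCv x a b 1 (-1) = -(hr*vd) -> QCv x a b (-1) (-1) = -(hl*vd)].
Proof.
move=> hP h1 h2 h3 h4 n1 n2 n3 n4.
have hE : prodEdges x a b = hr^+2 * hl^+2 * vu^+2 * vd^+2.
  rewrite h1 h2 h3 h4 /eH /eV /prodEdges !subrK; ring.
apply: a_vertex; last first.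
- by rewrite oppr_eq0 mulf_neq0.
- by rewrite oppr_eq0 mulf_neq0.
- by rewrite oppr_eq0 mulf_neq0.
- by rewrite mulf_neq0.
rewrite -/(prodQv x a b) hP hE; ring.
Qed.

Lemma nz_of_sq x (hnz : forall a b : int, x a b + x (a+1) b <> 0 /\ x a b + x a (b+1) <> 0)
  a b u : (u^+2 = eH x a b \/ u^+2 = eV x a b) -> u != 0.
Proof.
move=> h; apply/eqP => u0; move: h; rewrite u0 expr0n /= /eH /eV.
by case=> h; [apply: (hnz a b).1 | apply: (hnz a b).2]; rewrite -h.
Qed.

Definition Good x (j : int) (Hb V : int -> CC) : Prop := forall a,
  [/\ Hb a ^+2 = eH x a j, V a ^+2 = eV x a j, QCv x a j 1 1 = Hb a * V a
    & V (a+1) = V a + s * Hb a].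

Definition glue (fr fl : nat -> CC) (a : int) : CC :=
  match a with Posz n => fr n | Negz n => fl n.+1 end.

Lemma PoszS (n : nat) : (n.+1)%:Z = n%:Z + 1.
Proof. by rewrite -addn1 PoszD. Qed.
Lemma negS (n : nat) : - ((n.+1)%:Z) = - (n%:Z) - 1.
Proof. by rewrite PoszS opprD. Qed.
Lemma NegzE' (n : nat) : Negz n = - (n%:Z) - 1.
Proof. by rewrite NegzE negS. Qed.
Lemma glue_pos fr fl (n : nat) : glue fr fl n = fr n.
Proof. by []. Qed.
Lemma glue_neg fr fl (n : nat) : fr 0%N = fl 0%N -> glue fr fl (- (n%:Z)) = fl n.
Proof. by case: n => [|m] //= ->. Qed.
Lemma glue_negS fr fl (n : nat) : glue fr fl (- (n%:Z) - 1) = fl n.+1.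
Proof. by rewrite -NegzE'. Qed.
Lemma int_cases (a : int) : (exists n : nat, a = n%:Z) \/ (exists n : nat, a = - (n%:Z) - 1).
Proof. by case: a => n; [left | right]; exists n => //; rewrite NegzE'. Qed.

Section Row.
Variables (x : int -> int -> CC)
  (hnz : forall a b : int, x a b + x (a+1) b <> 0 /\ x a b + x a (b+1) <> 0)
  (hQC : forall a b : int, QC x a b = 0)
  (hP : forall a b : int, prodQv x a b = - prodEdges x a b).

Lemma nzH a b u : u^+2 = eH x a b -> u != 0.
Proof. by move=> h; exact: (nz_of_sq hnz (or_introl h)). Qed.
Lemma nzV a b u : u^+2 = eV x a b -> u != 0.
Proof. by move=> h; exact: (nz_of_sq hnz (or_intror h)). Qed.

Section R0.
Variable j : int.
Definition w0 := sqrtC (eV x 0 j).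
Fixpoint r0R (n : nat) : CC := match n with
  | 0%N => w0 | m.+1 => r0R m + s * (QCv x m j 1 1 / r0R m) end.
Fixpoint r0L (n : nat) : CC := match n with
  | 0%N => w0 | m.+1 => r0L m - s * (- QCv x (- (m%:Z)) j (-1) 1 / r0L m) end.
Definition H0l (n : nat) : CC := match n with
  | 0%N => 0 | m.+1 => - QCv x (- (m%:Z)) j (-1) 1 / r0L m end.

Lemma r0R_step n : r0R n ^+2 = eV x n j ->
  [/\ (QCv x n j 1 1 / r0R n)^+2 = eH x n j, QCv x n j 1 1 = (QCv x n j 1 1 / r0R n) * r0R n
    & r0R n.+1 ^+2 = eV x n.+1 j].
Proof.
move=> h; have n0 := nzV h.
have [q2 _ _] := X_QCsq (hQC n j).
have hu : (QCv x n j 1 1 / r0R n)^+2 = eH x n j.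
  by apply: (a_sqdiv _ h n0); rewrite q2 mulrC.
have hq : QCv x n j 1 1 = (QCv x n j 1 1 / r0R n) * r0R n by rewrite divfK.
split => //. have [_ hR _ _ _] := X_full hu h hq.
by rewrite PoszS; exact: hR.
Qed.

Lemma r0R_inv n : r0R n ^+2 = eV x n j.
Proof.
elim: n => [|n IH]; first by rewrite /= /w0 sqrtCK.
by have [_ _ ->] := r0R_step IH.
Qed.

Lemma r0L_step n : r0L n ^+2 = eV x (- (n%:Z)) j ->
  let a := - (n%:Z) - 1 in
  [/\ H0l n.+1 ^+2 = eH x a j, r0L n.+1 ^+2 = eV x a j
    & QCv x a j 1 1 = H0l n.+1 * r0L n.+1].
Proof.
move=> h a. have ea : a + 1 = - (n%:Z) by rewrite subrK.
have n0 := nzV h.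
have [_ q2 _] := X_QCsq (hQC a j).
rewrite ea in q2.
have hu : H0l n.+1 ^+2 = eH x a j.
  by rewrite /= mulNr sqrrN; apply: (a_sqdiv _ h n0); rewrite q2 mulrC.
have hq : QCv x (a+1) j (-1) 1 = - (H0l n.+1 * r0L n).
  by rewrite /= divfK // opprK ea.
rewrite -ea in h.
have [h1 h2] := X_C10 hu h hq.
by split.
Qed.

Lemma r0L_inv n : r0L n ^+2 = eV x (- (n%:Z)) j.
Proof.
elim: n => [|n IH]; first by rewrite /= oppr0 /w0 sqrtCK.
by have [_ h _] := r0L_step IH; rewrite negS.
Qed.

Lemma row0_good : Good x j (glue (fun n => QCv x n j 1 1 / r0R n) H0l) (glue r0R r0L).
Proof.
move=> a; case: (int_cases a) => [[n ->]|[n ->]].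
- have [h1 h2 h3] := r0R_step (r0R_inv n).
  rewrite !glue_pos; split => //; [exact: r0R_inv | by rewrite addn1].
- have [h1 h2 h3] := r0L_step (r0L_inv n).
  rewrite !glue_negS subrK glue_neg //; split => //.
  by rewrite /= subrK.
Qed.

End R0.

Section Up.
Variables (j : int) (Hb V : int -> CC) (hG : Good x j Hb V).
Definition Hu a := Hb a + s * V a.

Lemma up_facts a : [/\ Hu a ^+2 = eH x a (j+1),
   QCv x a (j+1) 1 (-1) = -(Hu a * V a)
 & QCv x (a+1) (j+1) (-1) (-1) = -(Hu a * V (a+1))].
Proof.
have [g1 g2 g3 g4] := hG a.
have [f1 _ _ f4 f5] := X_full g1 g2 g3.
by rewrite /Hu g4; split.
Qed.

Fixpoint upR (n : nat) : CC := match n with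
  | 0%N => QCv x 0 (j+1) 1 1 / Hu 0 | m.+1 => upR m + s * Hu m end.
Fixpoint upL (n : nat) : CC := match n with
  | 0%N => upR 0 | m.+1 => upL m - s * Hu (- (m%:Z) - 1) end.

Lemma upR_inv n : upR n ^+2 = eV x n (j+1) /\ QCv x n (j+1) 1 1 = Hu n * upR n.
Proof.
elim: n => [|n [IH1 IH2]].
  have [u2 _ _] := up_facts 0.
  have [q2 _ _] := X_QCsq (hQC 0 (j+1)).
  split; first by apply: (a_sqdiv q2 u2 (nzH u2)).
  by rewrite /= mulrC divfK // (nzH u2).
have [u2 _ _] := up_facts n.
have [_ f2 f3 _ _] := X_full u2 IH1 IH2.
have e3 : upR n.+1 ^+2 = eV x (n+1) (j+1) by exact: f2.
rewrite PoszS; split => //.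
have [h1 h2 _] := up_facts (n+1).
have [_ _ h3] := up_facts n.
have [g1 g2 _ _] := hG (n+1).
have e1 : Hu n ^+2 = eH x (n%:Z + 1 - 1) (j+1) by rewrite addrK.
have e2 : V (n%:Z+1) ^+2 = eV x (n%:Z+1) (j + 1 - 1) by rewrite [j + 1 - 1]addrK.
have [v1 _ _ _] := X_vertex (hP (n%:Z+1) (j+1)) h1 e1 e3 e2 (nzH h1) (nzH e1) (nzV e3) (nzV e2).
by apply: v1 => //; rewrite f3.
Qed.

Lemma upL_step n : upL n ^+2 = eV x (- (n%:Z)) (j+1) ->
  QCv x (- (n%:Z)) (j+1) 1 1 = Hu (- (n%:Z)) * upL n ->
  upL n.+1 ^+2 = eV x (- (n%:Z) - 1) (j+1) /\
  QCv x (- (n%:Z) - 1) (j+1) 1 1 = Hu (- (n%:Z) - 1) * upL n.+1.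
Proof.
move=> IH1 IH2.
set a := - (n%:Z) - 1.
have ea : a + 1 = - (n%:Z) by rewrite subrK.
have [u2 _ f3] := up_facts a.
have [h1 h2 _] := up_facts (a+1).
have [g1 g2 _ _] := hG (a+1).
rewrite -ea in IH1 IH2.
have e1 : Hu a ^+2 = eH x (a + 1 - 1) (j+1) by rewrite addrK.
have e2 : V (a+1) ^+2 = eV x (a+1) (j + 1 - 1) by rewrite [j + 1 - 1]addrK.
have [_ v2 _ _] := X_vertex (hP (a+1) (j+1)) h1 e1 IH1 e2 (nzH h1) (nzH e1) (nzV IH1) (nzV e2).
have := X_C10 u2 IH1 (v2 IH2 h2 f3).
by [].
Qed.

Lemma upL_inv n : upL n ^+2 = eV x (- (n%:Z)) (j+1) /\
  QCv x (- (n%:Z)) (j+1) 1 1 = Hu (- (n%:Z)) * upL n.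
Proof.
elim: n => [|n [IH1 IH2]]; first by rewrite oppr0; exact: (upR_inv 0).
by rewrite negS; apply: upL_step.
Qed.

Lemma up_good : Good x (j+1) Hu (glue upR upL).
Proof.
move=> a; case: (int_cases a) => [[n ->]|[n ->]].
- have [h1 h2] := upR_inv n.
  have [u2 _ _] := up_facts n.
  by rewrite !glue_pos; split => //; rewrite addn1.
- have [h1 h2] := upL_inv n.
  have [h3 h4] := upL_step h1 h2.
  have [u2 _ _] := up_facts (- (n%:Z) - 1).
  rewrite !glue_negS subrK glue_neg //; split => //.
  by rewrite /= subrK.
Qed.
End Up.

Section Down.
Variables (b : int) (Hb V : int -> CC) (hG : Good x (b+1) Hb V).

Lemma down_facts a : [/\ Hb a ^+2 = eH x a (b+1), V a ^+2 = eV x a (b+1),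
   QCv x a (b+1) 1 1 = Hb a * V a
 & QCv x (a+1) (b+1) (-1) 1 = -(Hb a * V (a+1))].
Proof.
have [g1 g2 g3 g4] := hG a.
have [_ _ f3 _ _] := X_full g1 g2 g3.
by rewrite g4; split.
Qed.

Fixpoint dnR (n : nat) : CC := match n with
  | 0%N => - QCv x 0 (b+1) 1 (-1) / Hb 0 | m.+1 => dnR m + s * (Hb m - s * dnR m) end.
Fixpoint dnL (n : nat) : CC := match n with
  | 0%N => dnR 0 | m.+1 => s * Hb (- (m%:Z) - 1) - dnL m end.
Definition Vd := glue dnR dnL.
Definition Hd a := Hb a - s * Vd a.

Lemma dnR_step n : dnR n ^+2 = eV x n b -> QCv x n (b+1) 1 (-1) = -(Hb n * dnR n) ->
  [/\ (Hb n - s * dnR n)^+2 = eH x n b, QCv x n b 1 1 = (Hb n - s * dnR n) * dnR n,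
      dnR n.+1 ^+2 = eV x (n%:Z+1) b
    & QCv x (n%:Z+1) (b+1) 1 (-1) = -(Hb (n%:Z+1) * dnR n.+1)].
Proof.
move=> IH1 IH2.
have [t2 _ _ _] := down_facts n.
have [c1 c2] := X_C01 IH1 t2 IH2.
have [_ f2 _ _ f5] := X_full c1 IH1 c2.
rewrite subrK in f5.
split => //.
have [h1 _ _ _] := down_facts (n%:Z+1).
have [_ _ p1 _] := down_facts (n%:Z+1).
have [_ _ _ p2] := down_facts n.
have [_ g2 _ _] := down_facts (n%:Z+1).
have e1 : Hb n ^+2 = eH x (n%:Z + 1 - 1) (b+1) by rewrite addrK.
have e3 : dnR n.+1 ^+2 = eV x (n%:Z+1) (b + 1 - 1) by rewrite [b + 1 - 1]addrK; exact: f2.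
have [_ _ v3 _] := X_vertex (hP (n%:Z+1) (b+1)) h1 e1 g2 e3 (nzH h1) (nzH e1) (nzV g2) (nzV e3).
by apply: v3 => //; exact: f5.
Qed.

Lemma dnR_inv n : dnR n ^+2 = eV x n b /\ QCv x n (b+1) 1 (-1) = -(Hb n * dnR n).
Proof.
elim: n => [|n [IH1 IH2]].
  have [t2 _ _ _] := down_facts 0.
  have [_ _ q2] := X_QCsq (hQC 0 b).
  split; first by rewrite /= mulNr sqrrN; apply: (a_sqdiv _ t2 (nzH t2)); rewrite q2 mulrC.
  by rewrite /= mulrC divfK ?opprK // (nzH t2).
have [_ _ h3 h4] := dnR_step IH1 IH2.
by rewrite PoszS.
Qed.

Lemma dnL_step n : dnL n ^+2 = eV x (- (n%:Z)) b ->
  QCv x (- (n%:Z)) (b+1) 1 (-1) = -(Hb (- (n%:Z)) * dnL n) ->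
  let a := - (n%:Z) - 1 in
  [/\ (s * dnL n - Hb a)^+2 = eH x a b, dnL n.+1 ^+2 = eV x a b,
      QCv x a b 1 1 = (s * dnL n - Hb a) * dnL n.+1
    & QCv x a (b+1) 1 (-1) = -(Hb a * dnL n.+1)].
Proof.
move=> IH1 IH2 a.
have ea : a + 1 = - (n%:Z) by rewrite subrK.
rewrite -ea in IH1 IH2.
have [t2 _ _ f4] := down_facts a.
have [h1 g2 p1 _] := down_facts (a+1).
have e1 : Hb a ^+2 = eH x (a + 1 - 1) (b+1) by rewrite [a + 1 - 1]addrK.
have e3 : dnL n ^+2 = eV x (a+1) (b + 1 - 1) by rewrite [b + 1 - 1]addrK.
have [_ _ _ v4] := X_vertex (hP (a+1) (b+1)) h1 e1 g2 e3 (nzH h1) (nzH e1) (nzV g2) (nzV e3).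
have P4 := v4 p1 f4 IH2.
have [c1 c2 c3] := X_C11 t2 IH1 P4.
have [_ _ _ f4' _] := X_full c1 c2 c3.
split => //.
by rewrite f4'; congr (- (_ * _)); rewrite /=; ring: hs.
Qed.

Lemma dnL_inv n : dnL n ^+2 = eV x (- (n%:Z)) b /\
  QCv x (- (n%:Z)) (b+1) 1 (-1) = -(Hb (- (n%:Z)) * dnL n).
Proof.
elim: n => [|n [IH1 IH2]]; first by rewrite oppr0; exact: (dnR_inv 0).
have [_ h2 _ h4] := dnL_step IH1 IH2.
by rewrite negS.
Qed.

Lemma down_good : Good x b Hd Vd /\ forall a, Hb a = Hd a + s * Vd a.
Proof.
split; last by move=> a; rewrite /Hd subrK.
move=> a; case: (int_cases a) => [[n ->]|[n ->]].
- have [h1 h2] := dnR_inv n.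
  have [c1 c2 c3 _] := dnR_step h1 h2.
  by rewrite /Hd /Vd !glue_pos; split => //; rewrite addn1.
- have [h1 h2] := dnL_inv n.
  have [c1 c2 c3 _] := dnL_step h1 h2.
  have eH' : Hd (- (n%:Z) - 1) = s * dnL n - Hb (- (n%:Z) - 1).
    by rewrite /Hd /Vd glue_negS /=; ring: hs.
  rewrite eH' /Vd !glue_negS subrK glue_neg //; split => //.
  by rewrite /=; ring: hs.
Qed.
End Down.

End Row.

Lemma Good_all x (h vv : int -> int -> CC) :
  (forall b, Good x b (h^~ b) (vv^~ b)) ->
  (forall a b, h a (b+1) = h a b + s * vv a b) ->
  (forall a b, QC x a b = 0) /\ (forall a b, prodQv x a b = - prodEdges x a b).
Proof.
move=> hG hrel; split.
  by move=> a b; have [g1 g2 g3 _] := hG b a; exact: X_QC g1 g2 g3.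
move=> a b.
have [g1 g2 g3 _] := hG b a.
have [l1 l2 l3 l4] := hG b (a-1).
have [d1 d2 d3 d4] := hG (b-1) a.
have [m1 m2 m3 m4] := hG (b-1) (a-1).
have [_ _ P2 _ _] := X_full l1 l2 l3.
have [_ _ _ P3 _] := X_full d1 d2 d3.
have [_ _ _ _ P4] := X_full m1 m2 m3.
rewrite -l4 -hrel -m4 !subrK in P2 P3 P4.
rewrite -hrel in P3 P4; rewrite ?subrK in P3 P4.
have hE : prodEdges x a b = h a b ^+2 * h (a-1) b ^+2 * vv a b ^+2 * vv a (b-1) ^+2.
  rewrite g1 g2 l1 d2 /eH /eV /prodEdges !subrK; ring.
rewrite hE /prodQv g3 P2 P3 P4; ring.
Qed.

Definition St := ((int -> CC) * (int -> CC))%type.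

Lemma up_ex (x : int -> int -> CC)
  (hnz : forall a b : int, x a b + x (a+1) b <> 0 /\ x a b + x a (b+1) <> 0)
  (hQC : forall a b : int, QC x a b = 0)
  (hP : forall a b : int, prodQv x a b = - prodEdges x a b) (j : int) (p : St) : exists p' : St,
  Good x j p.1 p.2 -> Good x (j+1) p'.1 p'.2 /\ (forall a, p'.1 a = p.1 a + s * p.2 a).
Proof.
exists (Hu p.1 p.2, glue (upR x j p.1 p.2) (upL x j p.1 p.2)) => G; split => //.
exact: (up_good hnz hQC hP G).
Qed.

Lemma down_ex (x : int -> int -> CC)
  (hnz : forall a b : int, x a b + x (a+1) b <> 0 /\ x a b + x a (b+1) <> 0)
  (hQC : forall a b : int, QC x a b = 0)
  (hP : forall a b : int, prodQv x a b = - prodEdges x a b) (j : int) (p : St) : exists p' : St,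
  Good x j p.1 p.2 -> Good x (j-1) p'.1 p'.2 /\ (forall a, p.1 a = p'.1 a + s * p'.2 a).
Proof.
exists (Hd x (j-1) p.1, Vd x (j-1) p.1) => G.
have G' : Good x (j - 1 + 1) p.1 p.2 by rewrite subrK.
exact: (down_good hnz hQC hP G').
Qed.

Lemma choice2 (R : int -> St -> St -> Prop) :
  (forall j p, exists p', R j p p') -> exists f : int -> St -> St, forall j p, R j p (f j p).
Proof.
move=> H.
exists (fun j p => proj1_sig (constructive_indefinite_description _ (H j p))).
move=> j p; exact: (proj2_sig (constructive_indefinite_description _ (H j p))).
Qed.

Fixpoint iterU (f : int -> St -> St) (p0 : St) (n : nat) : St :=
  match n with 0%N => p0 | m.+1 => f m (iterU f p0 m) end.
Fixpoint iterD (f : int -> St -> St) (p0 : St) (n : nat) : St :=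
  match n with 0%N => p0 | m.+1 => f (- (m%:Z)) (iterD f p0 m) end.

Lemma NS (n : nat) : Negz n.+1 + 1 = Negz n.
Proof. by rewrite !NegzE -[n.+2]addn1 PoszD opprD addrNK. Qed.

Definition xt_of (x : int -> int -> CC) (h vv : int -> int -> CC) (p q : int) : CC :=
  if ((p %% 2)%Z == 1) then h (p %/ 2)%Z (q %/ 2)%Z
  else if ((q %% 2)%Z == 1) then vv (p %/ 2)%Z (q %/ 2)%Z
  else x (p %/ 2)%Z (q %/ 2)%Z.

Lemma mod2a (a : int) : ((2 * a) %% 2)%Z = 0.
Proof. by rewrite mulrC modzMl. Qed.
Lemma mod2b (a : int) : ((2 * a + 1) %% 2)%Z = 1.
Proof. by rewrite mulrC modzMDl. Qed.
Lemma div2a (a : int) : ((2 * a) %/ 2)%Z = a.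
Proof. by rewrite mulrC mulzK. Qed.
Lemma div2b (a : int) : ((2 * a + 1) %/ 2)%Z = a.
Proof. by rewrite mulrC divzMDl // addr0. Qed.

Lemma xt00 x h vv a b : xt_of x h vv (2*a) (2*b) = x a b.
Proof. by rewrite /xt_of !mod2a !div2a. Qed.
Lemma xt10 x h vv a b : xt_of x h vv (2*a+1) (2*b) = h a b.
Proof. by rewrite /xt_of mod2b div2b div2a. Qed.
Lemma xt01 x h vv a b : xt_of x h vv (2*a) (2*b+1) = vv a b.
Proof. by rewrite /xt_of mod2a mod2b div2a div2b. Qed.

Lemma two1 (a : int) : 2 * a + 2 = 2 * (a + 1).
Proof. by rewrite mulrDr mulr1. Qed.

Lemma five_of_good x h vv :
  (forall b, Good x b (h^~ b) (vv^~ b)) ->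
  (forall a b, h a (b+1) = h a b + s * vv a b) ->
  forall a b, five_eqs (xt_of x h vv) a b.
Proof.
move=> hG hrel a b.
rewrite /five_eqs !two1 xt00 xt10 xt01 xt00 xt00 xt00 xt10 xt01.
have [g1 g2 g3 g4] := hG b a.
move: (a_solve11 hs2 g3) => e.
split => //; by rewrite e; ring.
Qed.

Lemma good_of_five xt :
  (forall a b, five_eqs xt a b) ->
  (forall b, Good (restrZ2 xt) b (fun a => xt (2*a+1) (2*b)) (fun a => xt (2*a) (2*b+1))) /\
  (forall a b, xt (2*a+1) (2*(b+1)) = xt (2*a+1) (2*b) + s * xt (2*a) (2*b+1)).
Proof.
move=> h5; split.
  move=> b a; have [f1 f2 f3 f4 f5] := h5 a b.
  rewrite /eH /eV /restrZ2 /QCv -!two1; split => //.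
  apply: (mulIf hs2); rewrite divfK ?hs2 // f1; ring.
move=> a b; have [f1 f2 f3 f4 f5] := h5 a b.
by rewrite -two1 f2.
Qed.

Theorem theorem5p9 :
  (forall x : int -> int -> CC,
     (forall a b : int, QC x a b = 0) ->
     (forall a b : int, prodQv x a b = - prodEdges x a b) ->
     (forall a b : int, x a b + x (a+1) b <> 0 /\ x a b + x a (b+1) <> 0) ->
     exists xt : int -> int -> CC,
       (forall a b : int, restrZ2 xt a b = x a b) /\
       (forall a b : int, five_eqs xt a b))
  /\
  (forall xt : int -> int -> CC,
     (forall a b : int, five_eqs xt a b) ->
     (forall a b : int, QC (restrZ2 xt) a b = 0) /\
     (forall a b : int, prodQv (restrZ2 xt) a b = - prodEdges (restrZ2 xt) a b)).
Proof.
split; last first.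
  move=> xt h5; have [G R] := good_of_five h5; exact: (Good_all G R).
move=> x hQC hP hnz.
have [fU hU] := choice2 (up_ex hnz hQC hP).
have [fD hD] := choice2 (down_ex hnz hQC hP).
pose p0 : St := (glue (fun n => QCv x n 0 1 1 / r0R x 0 n) (H0l x 0), glue (r0R x 0) (r0L x 0)).
have G0 : Good x 0 p0.1 p0.2 by exact: (row0_good hnz hQC 0).
have GU : forall n : nat, Good x n (iterU fU p0 n).1 (iterU fU p0 n).2.
  elim=> [|n IH] //; have [g _] := hU n _ IH; by rewrite PoszS.
have GD : forall n : nat, Good x (- (n%:Z)) (iterD fD p0 n).1 (iterD fD p0 n).2.
  elim=> [|n IH]; first by rewrite oppr0.
  have [g _] := hD _ _ IH; by rewrite negS.
pose rowf (b : int) : St := match b with Posz n => iterU fU p0 n | Negz n => iterD fD p0 n.+1 end.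
have hG : forall b, Good x b (fun a => (rowf b).1 a) (fun a => (rowf b).2 a).
  case=> n /=; first exact: GU.
  rewrite NegzE; exact: GD.
have hrel : forall a b, (rowf (b+1)).1 a = (rowf b).1 a + s * (rowf b).2 a.
  move=> a; case=> n.
    rewrite -PoszS /=; have [_ r] := hU n _ (GU n); exact: r.
  case: n => [|m].
    rewrite (_ : Negz 0 + 1 = 0) //=; have [_ r] := hD _ _ (GD 0%N); exact: r.
  rewrite NS /=; have [_ r] := hD _ _ (GD m.+1); exact: r.
exists (xt_of x (fun a b => (rowf b).1 a) (fun a b => (rowf b).2 a)); split.
  by move=> a b; rewrite /restrZ2 xt00.
exact: five_of_good.
Qed.
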